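(* Let $S[1..n]$ be a string and let $\mathrm{LLRc}[1..m]$ be the array of its useful LLRs, given as pairs $(start,end)$ in increasing order of start position, with $m\ge 1$. Then the values $L_1,\ldots,L_n$ and $R_1,\ldots,R_n$ can be computed in $O(n)$ time and space, where $L_y=\min\{i\mid \mathrm{LLRc}[i].end\ge y\}$ if this set is nonempty and $L_y=-1$ otherwise, and $R_x=\max\{i\mid \mathrm{LLRc}[i].start\le x\}$ if this set is nonempty and $R_x=-1$ otherwise.
   Context: For $1\le i\le j\le n$, $S[i..j]=S[i]\cdots S[j]$. A substring is unique if it has no other occurrence starting at a different position; it is a repeat otherwise. The left-bounded longest repeat starting at position $k$, $\mathrm{LLR}_k$, is a repeat $S[k..j]$ such that either $j=n$ or $S[k..j+1]$ is unique (it does not exist if $S[k]$ is unique). An LLR is useless if its position interval is contained in that of another LLR; otherwise it is useful. In $\mathrm{LLRc}$ both start and end positions are strictly increasing. Complexity is in the word-RAM model with each integer in $\{-1,0,\ldots,n+1\}$ occupying a constant number of words. *)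

(* Defs.v *)
From mathcomp Require Import all_boot all_order all_algebra ssrint.
Set Implicit Arguments. Unset Strict Implicit. Unset Printing Implicit Defensive.
Import Order.TTheory GRing.Theory Num.Theory.

(* Strings, repeats, LLRs (positions are 1-based, S[i] = nth 0 S i.-1) *)

(* S[i..j] for 1 <= i <= j <= n *)
Definition substr (S : seq nat) (i j : nat) : seq nat :=
  take (j.+1 - i) (drop i.-1 S).

Definition is_repeat (S : seq nat) (i j : nat) : Prop :=
  [/\ 1 <= i, i <= j, j <= size S &
      exists i', [/\ i' != i, 1 <= i', i' + (j - i) <= size S &
                   substr S i' (i' + (j - i)) = substr S i j]].

Definition is_unique (S : seq nat) (i j : nat) : Prop :=
  [/\ 1 <= i, i <= j, j <= size S & ~ is_repeat S i j].

Definition LLR (S : seq nat) (k j : nat) : Prop :=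
  is_repeat S k j /\ (j = size S \/ is_unique S k j.+1).

Definition useful_LLR (S : seq nat) (k j : nat) : Prop :=
  LLR S k j /\
  ~ (exists k' j', [/\ LLR S k' j', (k', j') <> (k, j), k' <= k & j <= j']).

Definition LLRc_of (S : seq nat) (A : seq (nat * nat)) : Prop :=
  sorted ltn (map fst A) /\ (forall p, p \in A <-> useful_LLR S p.1 p.2).

Definition LLRc_at (A : seq (nat * nat)) (i : nat) : nat * nat :=
  nth (0, 0) A i.-1.

Definition Lval (A : seq (nat * nat)) (y : nat) (v : int) : Prop :=
  (v = (-1)%R /\ forall i, 1 <= i <= size A -> ~ (y <= (LLRc_at A i).2))
  \/ exists i, [/\ 1 <= i <= size A, y <= (LLRc_at A i).2,
       (forall i', 1 <= i' <= size A -> y <= (LLRc_at A i').2 -> i <= i')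
     & v = Posz i].

Definition Rval (A : seq (nat * nat)) (x : nat) (v : int) : Prop :=
  (v = (-1)%R /\ forall i, 1 <= i <= size A -> ~ ((LLRc_at A i).1 <= x))
  \/ exists i, [/\ 1 <= i <= size A, (LLRc_at A i).1 <= x,
       (forall i', 1 <= i' <= size A -> (LLRc_at A i').1 <= x -> i' <= i)
     & v = Posz i].

Inductive instr : Type :=
| IConst of nat & int
| IAdd of nat & nat & nat
| ISub of nat & nat & nat
| ILoad of nat & nat
| IStore of nat & nat
| IJlt of nat & nat & nat
| IJmp of nat.

Record config := Config { pc : nat; memory : nat -> int }.

Definition upd (m : nat -> int) (a : nat) (v : int) : nat -> int :=
  fun x => if x == a then v else m x.

(* None = stuck (negative address); Some w = performs write w (if any) *)
Definition write_of (i : instr) (m : nat -> int) : option (option (nat * int)) :=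
  match i with
  | IConst a v => Some (Some (a, v))
  | IAdd a b c => Some (Some (a, (m b + m c)%R))
  | ISub a b c => Some (Some (a, (m b - m c)%R))
  | ILoad a b => if (0 <= m b)%R then Some (Some (a, m (absz (m b)))) else None
  | IStore a b => if (0 <= m a)%R then Some (Some (absz (m a), m b)) else None
  | IJlt _ _ _ => Some None
  | IJmp _ => Some None
  end.

Definition next_pc (i : instr) (m : nat -> int) (p : nat) : nat :=
  match i with
  | IJlt a b l => if (m a < m b)%R then l else p.+1
  | IJmp l => l
  | _ => p.+1
  end.

Definition program := seq instr.

Definition halted (P : program) (c : config) : bool := size P <= pc c.

Definition cur (P : program) (c : config) : instr := nth (IJmp 0) P (pc c).

Definition step (P : program) (c : config) : option config :=
  match write_of (cur P c) (memory c) with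
  | None => None
  | Some w =>
      Some (Config (next_pc (cur P c) (memory c) (pc c))
                   (match w with None => memory c | Some (a, v) => upd (memory c) a v end))
  end.

Definition step_write (P : program) (c : config) : option (nat * int) :=
  match write_of (cur P c) (memory c) with Some w => w | None => None end.

Fixpoint run (P : program) (t : nat) (c : config) : option config :=
  match t with
  | 0 => Some c
  | t'.+1 => if halted P c then Some c else obind (run P t') (step P c)
  end.

(* Input layout: mem[0] = n, mem[1] = m, mem[2..n+1] = S[1..n],
   mem[n+2+2(i-1)] = LLRc[i].start, mem[n+3+2(i-1)] = LLRc[i].end,
   everything else 0. *)
Definition init_mem (S : seq nat) (A : seq (nat * nat)) : nat -> int :=
  fun a =>
    if a == 0 then Posz (size S)
    else if a == 1 then Posz (size A)
    else if a < size S + 2 then Posz (nth 0 S (a - 2))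
    else if a < size S + 2 + 2 * size A then
      Posz (let t := a - (size S + 2) in
            let p := nth (0, 0) A t./2 in
            if odd t then p.2 else p.1)
    else Posz 0.

Definition init_config (S : seq nat) (A : seq (nat * nat)) : config :=
  Config 0 (init_mem S A).

Definition outL (S : seq nat) (A : seq (nat * nat)) (y : nat) : nat :=
  size S + 2 + 2 * size A + y.-1.
Definition outR (S : seq nat) (A : seq (nat * nat)) (x : nat) : nat :=
  size S + 2 + 2 * size A + size S + x.-1.

(* magnitude of input values: words hold O(1) such values *)
Definition in_bound (S : seq nat) : nat := size S + 2 + foldr maxn 0 S.

(* Main.v *)
Require Import Defs.
From mathcomp Require Import all_boot all_order all_algebra ssrint.
From mathcomp Require Import zify.
From Stdlib Require Import FunctionalExtensionality.
Import Order.TTheory GRing.Theory Num.Theory.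
Set Implicit Arguments. Unset Strict Implicit. Unset Printing Implicit Defensive.

Lemma run_halted P t c : halted P c -> run P t c = Some c.
Proof. by move=> H; case: t => //= t; rewrite H. Qed.

Lemma run_add P t1 t2 c :
  run P (t1 + t2) c = obind (run P t2) (run P t1 c).
Proof.
elim: t1 c => [|t1 IH] c //=.
case H: (halted P c) => /=; first by rewrite run_halted.
by case: (step P c) => //= c'; rewrite IH.
Qed.

Definition gd P (W : nat -> int -> Prop) c t c' :=
  run P t c = Some c' /\
  forall t' c'', t' < t -> run P t' c = Some c'' ->
    forall a v, step_write P c'' = Some (a, v) -> W a v.

Lemma gd_trans P W c t1 c1 t2 c2 :
  gd P W c t1 c1 -> gd P W c1 t2 c2 -> gd P W c (t1 + t2) c2.
Proof.
move=> [R1 W1] [R2 W2]; split; first by rewrite run_add R1.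
move=> t' c'' Ht Hr.
case: (ltnP t' t1) => Ht1; first exact: W1 Ht1 Hr.
apply: (W2 (t' - t1)); first lia.
by rewrite -(subnKC Ht1) run_add R1 /= in Hr.
Qed.

Lemma gd_step P W c c1 :
  pc c < size P -> step P c = Some c1 ->
  (forall a v, step_write P c = Some (a, v) -> W a v) -> gd P W c 1 c1.
Proof.
move=> Hp Hs Hw; split; first by rewrite /= /halted leqNgt Hp /= Hs.
by move=> [|//] c'' _ [<-].
Qed.

Definition reach0 P W c T c' := exists2 t, t <= T & gd P W c t c'.
Definition reach P W c T (F : config -> Prop) := exists cf, reach0 P W c T cf /\ F cf.

Lemma reach_refl P W c T (F : config -> Prop) : F c -> reach P W c T F.
Proof. move=> H; exists c; split => //; exists 0 => //; split => // t' c'' ; rewrite ltn0. Qed.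

Lemma reach_mono P W c T T' F : T <= T' -> reach P W c T F -> reach P W c T' F.
Proof. by move=> H [cf [[t Ht G] HF]]; exists cf; split => //; exists t => //; apply: leq_trans H. Qed.

Lemma r_step P W c c1 T F :
  pc c < size P -> step P c = Some c1 ->
  (forall a v, step_write P c = Some (a, v) -> W a v) ->
  reach P W c1 T F -> reach P W c T.+1 F.
Proof.
move=> Hp Hs Hw [cf [[t Ht G] HF]]; exists cf; split => //; exists (1 + t) => //.
exact: gd_trans (gd_step Hp Hs Hw) G.
Qed.

Definition code_at (P : program) l (Q : program) :=
  l + size Q <= size P /\
  forall j, j < size Q -> nth (IJmp 0) P (l + j) = nth (IJmp 0) Q j.

Section Instr.
Variables (P Q : program) (W : nat -> int -> Prop) (l : nat).
Hypothesis HC : code_at P l Q.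

Lemma cur_at j M : j < size Q -> cur P (Config (l + j) M) = nth (IJmp 0) Q j.
Proof. by move=> H; rewrite /cur /= HC.2. Qed.

Lemma pc_at j M : j < size Q -> pc (Config (l + j) M) < size P.
Proof. move=> H /=; have := HC.1; lia. Qed.

Lemma r_const j M a v T cf :
  j < size Q -> nth (IJmp 0) Q j = IConst a v -> W a v ->
  reach P W (Config (l + j.+1) (upd M a v)) T cf ->
  reach P W (Config (l + j) M) T.+1 cf.
Proof.
move=> Hj Hq Hw; apply: r_step; first exact: pc_at.
  by rewrite /step cur_at // Hq /= addnS.
by rewrite /step_write cur_at // Hq /= => a' v' [<- <-].
Qed.

Lemma r_add j M a b c T cf :
  j < size Q -> nth (IJmp 0) Q j = IAdd a b c -> W a (M b + M c)%R ->
  reach P W (Config (l + j.+1) (upd M a (M b + M c)%R)) T cf ->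
  reach P W (Config (l + j) M) T.+1 cf.
Proof.
move=> Hj Hq Hw; apply: r_step; first exact: pc_at.
  by rewrite /step cur_at // Hq /= addnS.
by rewrite /step_write cur_at // Hq /= => a' v' [<- <-].
Qed.

Lemma r_sub j M a b c T cf :
  j < size Q -> nth (IJmp 0) Q j = ISub a b c -> W a (M b - M c)%R ->
  reach P W (Config (l + j.+1) (upd M a (M b - M c)%R)) T cf ->
  reach P W (Config (l + j) M) T.+1 cf.
Proof.
move=> Hj Hq Hw; apply: r_step; first exact: pc_at.
  by rewrite /step cur_at // Hq /= addnS.
by rewrite /step_write cur_at // Hq /= => a' v' [<- <-].
Qed.

Lemma r_load j M a b x T cf :
  j < size Q -> nth (IJmp 0) Q j = ILoad a b -> M b = Posz x -> W a (M x) ->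
  reach P W (Config (l + j.+1) (upd M a (M x))) T cf ->
  reach P W (Config (l + j) M) T.+1 cf.
Proof.
move=> Hj Hq Hb Hw; apply: r_step; first exact: pc_at.
  by rewrite /step cur_at // Hq /= Hb /= addnS.
by rewrite /step_write cur_at // Hq /= Hb /= => a' v' [<- <-].
Qed.

Lemma r_store j M a b x T cf :
  j < size Q -> nth (IJmp 0) Q j = IStore a b -> M a = Posz x -> W x (M b) ->
  reach P W (Config (l + j.+1) (upd M x (M b))) T cf ->
  reach P W (Config (l + j) M) T.+1 cf.
Proof.
move=> Hj Hq Hb Hw; apply: r_step; first exact: pc_at.
  by rewrite /step cur_at // Hq /= Hb /= addnS.
by rewrite /step_write cur_at // Hq /= Hb /= => a' v' [<- <-].
Qed.

Lemma r_jlt_t j M a b lab T cf :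
  j < size Q -> nth (IJmp 0) Q j = IJlt a b lab -> (M a < M b)%R ->
  reach P W (Config lab M) T cf ->
  reach P W (Config (l + j) M) T.+1 cf.
Proof.
move=> Hj Hq Hb; apply: r_step; first exact: pc_at.
  by rewrite /step cur_at // Hq /= Hb.
by rewrite /step_write cur_at // Hq.
Qed.

Lemma r_jlt_f j M a b lab T cf :
  j < size Q -> nth (IJmp 0) Q j = IJlt a b lab -> ~~ (M a < M b)%R ->
  reach P W (Config (l + j.+1) M) T cf ->
  reach P W (Config (l + j) M) T.+1 cf.
Proof.
move=> Hj Hq Hb; apply: r_step; first exact: pc_at.
  by rewrite /step cur_at // Hq /= (negbTE Hb) addnS.
by rewrite /step_write cur_at // Hq.
Qed.

Lemma r_jmp j M lab T cf :
  j < size Q -> nth (IJmp 0) Q j = IJmp lab ->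
  reach P W (Config lab M) T cf ->
  reach P W (Config (l + j) M) T.+1 cf.
Proof.
move=> Hj Hq; apply: r_step; first exact: pc_at.
  by rewrite /step cur_at // Hq.
by rewrite /step_write cur_at // Hq.
Qed.
End Instr.

Definition prog (r l e : nat) : program := [::
 (* 0 *) IConst (r+0) 1;
 (* 1 *) IConst (r+1) 2;
 (* 2 *) IConst (r+14) 0;
 (* 3 *) IConst (r+15) (-1)%R;
 (* 4 *) IAdd (r+5) 0 (r+1);
 (* 5 *) IAdd (r+3) 1 1;
 (* 6 *) IAdd (r+3) (r+3) (r+5);
 (* 7 *) ISub (r+6) (r+3) (r+0);
 (* 8 *) IAdd (r+7) (r+6) 0;
 (* 9 *) IAdd (r+2) (r+5) (r+14);
 (* 10 *) IConst (r+4) 1;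
 (* 11 *) IAdd (r+10) 1 (r+0);
 (* 12 *) IJlt (r+2) (r+3) (l+14);
 (* 13 *) IJmp (l+31);
 (* 14 *) ILoad (r+5) (r+2);
 (* 15 *) IAdd (r+5) (r+7) (r+5);
 (* 16 *) ILoad (r+8) (r+5);
 (* 17 *) IJlt (r+8) (r+4) (l+19);
 (* 18 *) IJmp (l+20);
 (* 19 *) IStore (r+5) (r+4);
 (* 20 *) IAdd (r+5) (r+2) (r+0);
 (* 21 *) ILoad (r+5) (r+5);
 (* 22 *) IAdd (r+5) (r+6) (r+5);
 (* 23 *) ILoad (r+13) (r+5);
 (* 24 *) ISub (r+8) (r+10) (r+4);
 (* 25 *) IJlt (r+13) (r+8) (l+27);
 (* 26 *) IJmp (l+28);
 (* 27 *) IStore (r+5) (r+8);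
 (* 28 *) IAdd (r+2) (r+2) (r+1);
 (* 29 *) IAdd (r+4) (r+4) (r+0);
 (* 30 *) IJmp (l+12);
 (* 31 *) IAdd (r+11) (r+7) (r+0);
 (* 32 *) IAdd (r+12) (r+7) 0;
 (* 33 *) IAdd (r+12) (r+12) (r+0);
 (* 34 *) IConst (r+9) 0;
 (* 35 *) IJlt (r+11) (r+12) (l+37);
 (* 36 *) IJmp (l+47);
 (* 37 *) ILoad (r+8) (r+11);
 (* 38 *) IJlt (r+9) (r+8) (l+40);
 (* 39 *) IJmp (l+41);
 (* 40 *) IAdd (r+9) (r+8) (r+14);
 (* 41 *) IJlt (r+9) (r+0) (l+45);
 (* 42 *) IStore (r+11) (r+9);
 (* 43 *) IAdd (r+11) (r+11) (r+0);
 (* 44 *) IJmp (l+35);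
 (* 45 *) IStore (r+11) (r+15);
 (* 46 *) IJmp (l+43);
 (* 47 *) IAdd (r+11) (r+6) 0;
 (* 48 *) IConst (r+9) 0;
 (* 49 *) IJlt (r+6) (r+11) (l+51);
 (* 50 *) IJmp e;
 (* 51 *) ILoad (r+8) (r+11);
 (* 52 *) IJlt (r+9) (r+8) (l+54);
 (* 53 *) IJmp (l+55);
 (* 54 *) IAdd (r+9) (r+8) (r+14);
 (* 55 *) IJlt (r+9) (r+0) (l+60);
 (* 56 *) ISub (r+13) (r+10) (r+9);
 (* 57 *) IStore (r+11) (r+13);
 (* 58 *) ISub (r+11) (r+11) (r+0);
 (* 59 *) IJmp (l+49);
 (* 60 *) IStore (r+11) (r+15);
 (* 61 *) IJmp (l+58) ].

Definition setr (regs : nat -> int) k v : nat -> int :=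
  fun x => if x == k then v else regs x.

Section Mem.
Variables (S : seq nat) (A : seq (nat * nat)) (r : nat) (base : nat -> int).
Local Notation n := (size S).
Local Notation m := (size A).
Definition OL := n + 1 + 2 * m.
Definition ORb := OL + n.
Definition st i := (nth (0,0) A i).1.
Definition en i := (nth (0,0) A i).2.

Definition absmem (regs Lf Rf : nat -> int) (a : nat) : int :=
  if r <= a < r + 16 then regs (a - r)
  else if OL < a <= OL + n then Lf (a - OL)
  else if ORb < a <= ORb + n then Rf (a - ORb)
  else base a.

Hypothesis Hr : 2 <= r <= 200 /\ (r + 16 <= n + 2 \/ ORb + n < r).
Hypothesis hb0 : base 0 = Posz n.
Hypothesis hb1 : base 1 = Posz m.
Hypothesis hbst : forall i, i < m -> base (n + 2 + 2 * i) = Posz (st i).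
Hypothesis hben : forall i, i < m -> base (n + 2 + 2 * i + 1) = Posz (en i).

Section Rd.
Variables (regs Lf Rf : nat -> int).

Lemma rd_reg k : k < 16 -> absmem regs Lf Rf (r + k) = regs k.
Proof. by move=> H; rewrite /absmem ifT ?addKn //; apply/andP; split; lia. Qed.

Lemma rd_L y : 1 <= y <= n -> absmem regs Lf Rf (OL + y) = Lf y.
Proof.
move=> H; rewrite /absmem ifF; last by move: Hr; rewrite /ORb /OL; lia.
by rewrite ifT ?addKn //; apply/andP; split; lia.
Qed.

Lemma rd_R x : 1 <= x <= n -> absmem regs Lf Rf (ORb + x) = Rf x.
Proof.
move=> H; rewrite /absmem ifF; last by move: Hr; rewrite /ORb /OL; lia.
rewrite ifF; last by rewrite /ORb /OL; lia.
by rewrite ifT ?addKn //; apply/andP; split; lia.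
Qed.

Lemma rd_base a : a < n + 2 + 2 * m -> ~~ (r <= a < r + 16) -> absmem regs Lf Rf a = base a.
Proof.
move=> H1 H2; rewrite /absmem (negbTE H2) ifF; last by rewrite /OL; lia.
by rewrite ifF // /ORb /OL; lia.
Qed.

Lemma rd_0 : absmem regs Lf Rf 0 = Posz n.
Proof. by rewrite rd_base // ?hb0; move: Hr; lia. Qed.
Lemma rd_1 : absmem regs Lf Rf 1 = Posz m.
Proof.
rewrite /absmem ifF; last by move: Hr; lia.
by rewrite ifF ?ifF // /ORb /OL; lia.
Qed.
Lemma rd_st i : i < m -> absmem regs Lf Rf (n + 2 + 2 * i) = Posz (st i).
Proof. by move=> H; rewrite rd_base ?hbst //; move: Hr; rewrite /ORb /OL; lia. Qed.
Lemma rd_en i : i < m -> absmem regs Lf Rf (n + 2 + 2 * i + 1) = Posz (en i).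
Proof. by move=> H; rewrite rd_base ?hben //; move: Hr; rewrite /ORb /OL; lia. Qed.

Lemma up_reg k v : k < 16 ->
  upd (absmem regs Lf Rf) (r + k) v = absmem (setr regs k v) Lf Rf.
Proof.
move=> H; apply: functional_extensionality => a; rewrite /upd /absmem /setr.
case: eqP => [->|Ha]; first by rewrite ifT ?addKn ?eqxx //; apply/andP; split; lia.
case: ifP => // H2; rewrite ifF //; apply/eqP; lia.
Qed.

Lemma up_L y v : 1 <= y <= n ->
  upd (absmem regs Lf Rf) (OL + y) v = absmem regs (setr Lf y v) Rf.
Proof.
move=> H; apply: functional_extensionality => a; rewrite /upd /absmem /setr.
case: eqP => [->|Ha].
  rewrite ifF; last by move: Hr; rewrite /ORb /OL; lia.
  by rewrite ifT ?addKn ?eqxx //; apply/andP; split; lia.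
case: ifP => // H2; case: ifP => // H3; rewrite ifF //; apply/eqP; lia.
Qed.

Lemma up_R x v : 1 <= x <= n ->
  upd (absmem regs Lf Rf) (ORb + x) v = absmem regs Lf (setr Rf x v).
Proof.
move=> H; apply: functional_extensionality => a; rewrite /upd /absmem /setr.
case: eqP => [->|Ha].
  rewrite ifF; last by move: Hr; rewrite /ORb /OL; lia.
  rewrite ifF; last by rewrite /ORb /OL; lia.
  by rewrite ifT ?addKn ?eqxx //; apply/andP; split; lia.
case: ifP => // H2; case: ifP => // H3; case: ifP => // H4; rewrite ifF //; apply/eqP; lia.
Qed.


End Rd.

Definition W (a : nat) (v : int) : Prop :=
  a < 1000 * n.+1 /\ (`|v| <= Posz (1000 * in_bound S))%R.

Lemma Wok a v : a < 300 + 5 * n -> (`|v| <= Posz (100 + 5 * n))%R -> W a v.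
Proof. by rewrite /W /in_bound; lia. Qed.

Hypothesis hst : forall i, i < m -> 0 < st i <= n.
Hypothesis hen : forall i, i < m -> 0 < en i <= n.
Hypothesis hmn : m <= n.

Definition RB k x := \max_(i < k) (if st i == x then i.+1 else 0).
Definition LB k y := \max_(i < k) (if en i == y then m - i else 0).

Lemma RBS k x : RB k.+1 x = maxn (RB k x) (if st k == x then k.+1 else 0).
Proof. by rewrite /RB big_ord_recr. Qed.
Lemma LBS k y : LB k.+1 y = maxn (LB k y) (if en k == y then m - k else 0).
Proof. by rewrite /LB big_ord_recr. Qed.
Lemma RB0 x : RB 0 x = 0. Proof. by rewrite /RB big_ord0. Qed.
Lemma LB0 y : LB 0 y = 0. Proof. by rewrite /LB big_ord0. Qed.
Lemma RB_le k x : RB k x <= k.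
Proof. by apply/bigmax_leqP => i _; case: ifP => // _; apply: ltn_ord. Qed.
Lemma LB_le k y : LB k y <= m.
Proof. by apply/bigmax_leqP => i _; case: ifP => // _; apply: leq_subr. Qed.

Definition CR (regs : nat -> int) :=
  [/\ regs 0 = 1%R, regs 1 = 2%R, regs 3 = Posz (n + 2 + 2 * m), regs 6 = Posz OL
   & [/\ regs 7 = Posz ORb, regs 10 = Posz m.+1, regs 14 = 0%R & regs 15 = (-1)%R]].

Lemma CR_set regs k v : k \notin [:: 0; 1; 3; 6; 7; 10; 14; 15] -> CR regs -> CR (setr regs k v).
Proof.
move=> Hk [h0 h1 h3 h6 [h7 h10 h14 h15]].
have F j : j \in [:: 0; 1; 3; 6; 7; 10; 14; 15] -> (j == k) = false.
  by move=> Hj; apply/negbTE; apply: contra Hk => /eqP <-.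
by rewrite /CR /setr !F.
Qed.

Hypothesis hm1 : 0 < m.
Hypothesis hbL : forall y, 0 < y <= n -> base (OL + y) = 0%R.
Hypothesis hbR : forall x, 0 < x <= n -> base (ORb + x) = 0%R.

Lemma absmem_base :
  base = absmem (fun k => base (r + k)) (fun y => base (OL + y)) (fun x => base (ORb + x)).
Proof.
apply: functional_extensionality => a; rewrite /absmem.
case: ifP => [/andP[H _]|_]; first by rewrite subnKC.
case: ifP => [/andP[H _]|_]; first by rewrite subnKC // ltnW.
case: ifP => [/andP[H _]|_] //; by rewrite subnKC // ltnW.
Qed.

Definition RR x := \max_(i < m) (if st i <= x then i.+1 else 0).
Definition LL y := \max_(i < m) (if y <= en i then m - i else 0).

Lemma RR0 : RR 0 = 0.
Proof.
by apply/eqP; rewrite -leqn0; apply/bigmax_leqP => i _; have := hst (ltn_ord i); case: ifP => //; lia.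
Qed.

Lemma RRS x : RR x.+1 = maxn (RR x) (RB m x.+1).
Proof.
rewrite /RR /RB -big_split /=; apply: eq_bigr => i _.
case: ifP => H1; case: ifP => H2; case: ifP => H3; lia.
Qed.

Lemma LLn : LL n.+1 = 0.
Proof.
by apply/eqP; rewrite -leqn0; apply/bigmax_leqP => i _; have := hen (ltn_ord i); case: ifP => //; lia.
Qed.

Lemma LLS y : LL y = maxn (LL y.+1) (LB m y).
Proof.
rewrite /LL /LB -big_split /=; apply: eq_bigr => i _.
case: ifP => H1; case: ifP => H2; case: ifP => H3; lia.
Qed.

Lemma RR_le x : RR x <= m.
Proof. by apply/bigmax_leqP => i _; case: ifP => // _; apply: ltn_ord. Qed.
Lemma LL_le y : LL y <= m.
Proof. by apply/bigmax_leqP => i _; case: ifP => // _; apply: leq_subr. Qed.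

Definition outRv x : int := if RR x == 0 then (-1)%R else Posz (RR x).
Definition outLv y : int := if LL y == 0 then (-1)%R else Posz (m.+1 - LL y).

Lemma Rcorrect x : Rval A x (outRv x).
Proof.
rewrite /Rval /outRv /LLRc_at; case: eqP => H0.
  left; split => // i Hi Hs.
  have Hi' : i.-1 < m by lia.
  have := leq_bigmax (F := fun i : 'I_m => if st i <= x then i.+1 else 0) (Ordinal Hi').
  rewrite -/(RR x) H0 /= -/(st i.-1) Hs; lia.
right; have hcm : 0 < #|'I_m| by rewrite card_ord.
have [i0 Hi0] := @bigop.eq_bigmax _ (fun i : 'I_m => if st i <= x then i.+1 else 0) hcm.
move: Hi0; rewrite -/(RR x); case: ifP => Hs Heq; last by lia.
exists i0.+1; split => //; first by have := ltn_ord i0; lia.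
move=> i' Hi' Hs'; have Hi'' : i'.-1 < m by lia.
have := leq_bigmax (F := fun i : 'I_m => if st i <= x then i.+1 else 0) (Ordinal Hi'').
  rewrite -/(RR x) Heq /= -/(st i'.-1) Hs'; lia.
by rewrite Heq.
Qed.

Lemma Lcorrect y : Lval A y (outLv y).
Proof.
rewrite /Lval /outLv /LLRc_at; case: eqP => H0.
  left; split => // i Hi Hs.
  have Hi' : i.-1 < m by lia.
  have := leq_bigmax (F := fun i : 'I_m => if y <= en i then m - i else 0) (Ordinal Hi').
  rewrite -/(LL y) H0 /= -/(en i.-1) Hs; lia.
right; have hcm : 0 < #|'I_m| by rewrite card_ord.
have [i0 Hi0] := @bigop.eq_bigmax _ (fun i : 'I_m => if y <= en i then m - i else 0) hcm.
move: Hi0; rewrite -/(LL y); case: ifP => Hs Heq; last by lia.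
exists i0.+1; split => //; first by have := ltn_ord i0; lia.
  move=> i' Hi' Hs'; have Hi'' : i'.-1 < m by lia.
  have := leq_bigmax (F := fun i : 'I_m => if y <= en i then m - i else 0) (Ordinal Hi'').
  rewrite -/(LL y) Heq /= -/(en i'.-1) Hs'; have := ltn_ord i0; lia.
by rewrite Heq; have := ltn_ord i0; lia.
Qed.

Variables (P : program) (l e : nat).
Hypothesis HC : code_at P l (prog r l e).

Definition SI k c := exists regs Lf Rf,
  [/\ c = Config (l + 12) (absmem regs Lf Rf), CR regs,
      regs 2 = Posz (n + 2 + 2 * k), regs 4 = Posz k.+1
    & (forall x, 0 < x <= n -> Rf x = Posz (RB k x)) /\
      (forall y, 0 < y <= n -> Lf y = Posz (LB k y))].

Ltac rd := rewrite ?rd_reg ?rd_0 ?rd_1 // /setr /=.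

Definition SI2 k c := exists regs Lf Rf,
  [/\ c = Config (l + 20) (absmem regs Lf Rf), CR regs,
      regs 2 = Posz (n + 2 + 2 * k), regs 4 = Posz k.+1
    & (forall x, 0 < x <= n -> Rf x = Posz (RB k.+1 x)) /\
      (forall y, 0 < y <= n -> Lf y = Posz (LB k y))].

Lemma kont c T T' cf : T <= T' -> reach P W c T cf -> reach P W c T' cf.
Proof. by move=> H; apply: reach_mono. Qed.

Lemma store_body1 k c T cf : k < m -> SI k c ->
  (forall c', SI2 k c' -> reach P W c' T cf) -> reach P W c (6 + T) cf.
Proof.
move=> Hk [regs [Lf [Rf [-> Hcr H2 H4 [HR HL]]]]] K.
have Hcr' := Hcr; case: Hcr' => [h0 h1 h3 h6 [h7 h10 h14 h15]].
have hsk := hst Hk; have [hs1 hs2] := andP hsk.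
apply: (r_jlt_t HC (j := 12)) => //; first by rd; rewrite H2 h3; lia.
apply: (r_load HC (j := 14) (x := n + 2 + 2 * k)) => //; first by rd.
  rewrite rd_st //; apply: Wok; lia.
rewrite rd_st // up_reg //.
apply: (r_add HC (j := 15)) => //.
  rd; rewrite h7; apply: Wok; rewrite /ORb /OL; lia.
rd; rewrite h7 up_reg //.
apply: (r_load HC (j := 16) (x := ORb + st k)) => //; first by rd; lia.
  rewrite rd_R ?HR //. apply: Wok; have := RB_le k (st k); lia.
rewrite rd_R // HR // up_reg //.
apply: (r_jlt_t HC (j := 17)) => //; first by rd; rewrite H4; have := RB_le k (st k); lia.
apply: (r_store HC (j := 19) (x := ORb + st k)) => //; first by rd; lia.
  rd; rewrite H4; apply: Wok; rewrite /ORb /OL; lia.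
rd; rewrite H4 up_R //.
apply: K; do 3 eexists; split; first reflexivity.
- by move: Hcr; rewrite /CR /=.
- by [].
- by [].
split => // x Hx; rewrite /setr RBS; case: eqP => [->|/eqP Hne]; first by rewrite eqxx; have := RB_le k (st k); lia.
by rewrite HR // ifF; [lia | apply/negbTE; rewrite eq_sym].
Qed.
Lemma store_body2 k c T cf : k < m -> SI2 k c ->
  (forall c', SI k.+1 c' -> reach P W c' T cf) -> reach P W c (11 + T) cf.
Proof.
move=> Hk [regs [Lf [Rf [-> Hcr H2 H4 [HR HL]]]]] K.
have Hcr' := Hcr; case: Hcr' => [h0 h1 h3 h6 [h7 h10 h14 h15]].
have hsk := hen Hk; have [hs1 hs2] := andP hsk.
apply: (r_add HC (j := 20)) => //.
  rd; rewrite H2 h0; apply: Wok; lia.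
rd; rewrite H2 h0 up_reg //.
apply: (r_load HC (j := 21) (x := n + 2 + 2 * k + 1)) => //; first by rd; lia.
  rewrite rd_en //; apply: Wok; lia.
rewrite rd_en // up_reg //.
apply: (r_add HC (j := 22)) => //.
  rd; rewrite h6; apply: Wok; rewrite /OL; lia.
rd; rewrite h6 up_reg //.
apply: (r_load HC (j := 23) (x := OL + en k)) => //; first by rd; lia.
  rewrite rd_L ?HL //; apply: Wok; have := LB_le k (en k); lia.
rewrite rd_L // HL // up_reg //.
apply: (r_sub HC (j := 24)) => //.
  rd; rewrite h10 H4; apply: Wok; lia.
rd; rewrite h10 H4 up_reg //.
have HLS y : 0 < y <= n -> LB k.+1 y = if y == en k then maxn (LB k y) (m - k) else LB k y.
  by move=> Hy; rewrite LBS eq_sym; case: eqP => // _; rewrite maxn0.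
case: (ltnP (LB k (en k)) (m - k)) => Hc.
- apply: (r_jlt_t HC (j := 25)) => //; first by rd; lia.
  apply: (r_store HC (j := 27) (x := OL + en k)) => //; first by rd; lia.
    rd; apply: Wok; rewrite /OL; lia.
  rd; rewrite up_L //.
  apply: (r_add HC (j := 28)) => //.
    rd; rewrite H2 h1; apply: Wok; lia.
  rd; rewrite H2 h1 up_reg //.
  apply: (r_add HC (j := 29)) => //.
    rd; rewrite H4 h0; apply: Wok; lia.
  rd; rewrite H4 h0 up_reg //.
  apply: (r_jmp HC (j := 30)) => //.
  apply: kont (K _ _); first lia.
  do 3 eexists; split; first reflexivity.
  + by move: Hcr; rewrite /CR /=.
  + by rewrite /setr /=; lia.
  + by rewrite /setr /=; lia.
  split => // y Hy; rewrite /setr HLS //; case: eqP => [->|_]; last by rewrite HL.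
  by rewrite -/(maxn _ _) (maxn_idPr (ltnW Hc)); lia.
- apply: (r_jlt_f HC (j := 25)) => //; first by rd; lia.
  apply: (r_jmp HC (j := 26)) => //.
  apply: (r_add HC (j := 28)) => //.
    rd; rewrite H2 h1; apply: Wok; lia.
  rd; rewrite H2 h1 up_reg //.
  apply: (r_add HC (j := 29)) => //.
    rd; rewrite H4 h0; apply: Wok; lia.
  rd; rewrite H4 h0 up_reg //.
  apply: (r_jmp HC (j := 30)) => //.
  apply: kont (K _ _); first lia.
  do 3 eexists; split; first reflexivity.
  + by move: Hcr; rewrite /CR /=.
  + by rewrite /setr /=; lia.
  + by rewrite /setr /=; lia.
  split => // y Hy; rewrite HLS //; case: eqP => [->|_]; last by rewrite HL.
  by rewrite (maxn_idPl Hc) HL.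
Qed.
Lemma loop (I : nat -> config -> Prop) N T cf :
  (forall k c T', k < N -> I k c -> (forall c', I k.+1 c' -> reach P W c' T' cf) ->
     reach P W c (T + T') cf) ->
  forall k c T', k <= N -> I k c -> (forall c', I N c' -> reach P W c' T' cf) ->
     reach P W c (T * (N - k) + T') cf.
Proof.
move=> B k c T' Hk; move Hd: (N - k) => d.
elim: d k c Hk Hd => [|d IH] k c Hk Hd HI K.
  have E : k = N by lia.
  by rewrite muln0 add0n; apply: K; rewrite -E.
apply: kont (B k c (T * d + T') _ HI _); [lia | lia |].
by move=> c' Hc'; apply: (IH k.+1) => //; lia.
Qed.

Lemma store_body k c T cf : k < m -> SI k c ->
  (forall c', SI k.+1 c' -> reach P W c' T cf) -> reach P W c (17 + T) cf.
Proof.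
move=> Hk HI K; rewrite (_ : 17 + T = 6 + (11 + T)) //.
by apply: (store_body1 Hk HI) => c' H; apply: (store_body2 Hk H).
Qed.

Definition RI j c := exists regs Lf Rf,
  [/\ c = Config (l + 35) (absmem regs Lf Rf), CR regs,
      regs 11 = Posz (ORb + j.+1), regs 12 = Posz (ORb + n.+1)
    & [/\ regs 9 = Posz (RR j),
      (forall y, 0 < y <= n -> Lf y = Posz (LB m y)) &
      (forall x, 0 < x <= n -> Rf x = if x <= j then outRv x else Posz (RB m x))]].

Definition RI2 j c := exists regs Lf Rf,
  [/\ c = Config (l + 41) (absmem regs Lf Rf), CR regs,
      regs 11 = Posz (ORb + j.+1), regs 12 = Posz (ORb + n.+1)
    & [/\ regs 9 = Posz (RR j.+1),
      (forall y, 0 < y <= n -> Lf y = Posz (LB m y)) &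
      (forall x, 0 < x <= n -> Rf x = if x <= j then outRv x else Posz (RB m x))]].

Lemma RB_lem x : RB m x <= m.
Proof. exact: RB_le. Qed.

Lemma rsweep1 j c T cf : j < n -> RI j c ->
  (forall c', RI2 j c' -> reach P W c' T cf) -> reach P W c (4 + T) cf.
Proof.
move=> Hj [regs [Lf [Rf [-> Hcr H11 H12 [H9 HL HR]]]]] K.
have Hcr' := Hcr; case: Hcr' => [h0 h1 h3 h6 [h7 h10 h14 h15]].
have Hj1 : 0 < j.+1 <= n by lia.
have hRR := RRS j; have hRBm := RB_lem j.+1; have hRRm := RR_le j.
apply: (r_jlt_t HC (j := 35)) => //; first by rd; rewrite H11 H12; lia.
apply: (r_load HC (j := 37) (x := ORb + j.+1)) => //; first by rd.
  rewrite rd_R ?HR ?ltnn //; apply: Wok; lia.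
rewrite rd_R ?HR ?ltnn // up_reg //.
case: (ltnP (RR j) (RB m j.+1)) => Hc.
- apply: (r_jlt_t HC (j := 38)) => //; first by rd; rewrite H9; lia.
  apply: (r_add HC (j := 40)) => //.
    rd; rewrite h14; apply: Wok; lia.
  rd; rewrite h14 up_reg //.
  apply: kont (K _ _); first lia.
  do 3 eexists; split; first reflexivity.
  + by move: Hcr; rewrite /CR /setr /=.
  + by rewrite /setr /=.
  + by rewrite /setr /=.
  split => //; rewrite /setr /= hRR; lia.
- apply: (r_jlt_f HC (j := 38)) => //; first by rd; rewrite H9; lia.
  apply: (r_jmp HC (j := 39)) => //.
  apply: kont (K _ _); first lia.
  do 3 eexists; split; first reflexivity.
  + by move: Hcr; rewrite /CR /setr /=.
  + by rewrite /setr /=.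
  + by rewrite /setr /=.
  split => //; rewrite /setr /= hRR; lia.
Qed.

Lemma rsweep2 j c T cf : j < n -> RI2 j c ->
  (forall c', RI j.+1 c' -> reach P W c' T cf) -> reach P W c (5 + T) cf.
Proof.
move=> Hj [regs [Lf [Rf [-> Hcr H11 H12 [H9 HL HR]]]]] K.
have Hcr' := Hcr; case: Hcr' => [h0 h1 h3 h6 [h7 h10 h14 h15]].
have hRRm := RR_le j.+1.
have Hj1 : 0 < j.+1 <= n by lia.
have HRf v : v = outRv j.+1 -> forall x, 0 < x <= n ->
    setr Rf j.+1 v x = if x <= j.+1 then outRv x else Posz (RB m x).
  move=> -> x Hx; rewrite /setr; case: eqP => [->|Hne]; first by rewrite leqnn.
  have E : (x <= j.+1) = (x <= j) by apply/idP/idP; lia.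
  by rewrite HR // E.
case: (posnP (RR j.+1)) => Hc.
- apply: (r_jlt_t HC (j := 41)) => //; first by rd; rewrite H9 h0; lia.
  apply: (r_store HC (j := 45) (x := ORb + j.+1)) => //; first by rd.
    rd; rewrite h15; apply: Wok; rewrite /ORb /OL; lia.
  rd; rewrite h15 up_R //.
  apply: (r_jmp HC (j := 46)) => //.
  apply: (r_add HC (j := 43)) => //.
    rd; rewrite H11 h0; apply: Wok; rewrite /ORb /OL; lia.
  rd; rewrite H11 h0 up_reg //.
  apply: (r_jmp HC (j := 44)) => //.
  apply: kont (K _ _); first lia.
  do 3 eexists; split; first reflexivity.
  + by move: Hcr; rewrite /CR /setr /=.
  + by rewrite /setr /=; lia.
  + by rewrite /setr /=.
  by split => //; apply: (HRf (-1)%R); rewrite /outRv Hc.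
- apply: (r_jlt_f HC (j := 41)) => //; first by rd; rewrite H9 h0; lia.
  apply: (r_store HC (j := 42) (x := ORb + j.+1)) => //; first by rd.
    rd; rewrite H9; apply: Wok; rewrite /ORb /OL; lia.
  rd; rewrite H9 up_R //.
  apply: (r_add HC (j := 43)) => //.
    rd; rewrite H11 h0; apply: Wok; rewrite /ORb /OL; lia.
  rd; rewrite H11 h0 up_reg //.
  apply: (r_jmp HC (j := 44)) => //.
  apply: kont (K _ _); first lia.
  do 3 eexists; split; first reflexivity.
  + by move: Hcr; rewrite /CR /setr /=.
  + by rewrite /setr /=; lia.
  + by rewrite /setr /=.
  by split => //; apply: HRf; rewrite /outRv ifF //; lia.
Qed.
Definition LI j c := exists regs Lf Rf,
  [/\ c = Config (l + 49) (absmem regs Lf Rf), CR regs,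
      regs 11 = Posz (OL + (n - j)), regs 9 = Posz (LL (n - j).+1)
    & (forall x, 0 < x <= n -> Rf x = outRv x) /\
      (forall y, 0 < y <= n -> Lf y = if n - j < y then outLv y else Posz (LB m y))].

Definition LI2 j c := exists regs Lf Rf,
  [/\ c = Config (l + 55) (absmem regs Lf Rf), CR regs,
      regs 11 = Posz (OL + (n - j)), regs 9 = Posz (LL (n - j))
    & (forall x, 0 < x <= n -> Rf x = outRv x) /\
      (forall y, 0 < y <= n -> Lf y = if n - j < y then outLv y else Posz (LB m y))].

Lemma lsweep1 j c T cf : j < n -> LI j c ->
  (forall c', LI2 j c' -> reach P W c' T cf) -> reach P W c (4 + T) cf.
Proof.
move=> Hj [regs [Lf [Rf [-> Hcr H11 H9 [HR HL]]]]] K.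
have Hcr' := Hcr; case: Hcr' => [h0 h1 h3 h6 [h7 h10 h14 h15]].
have Hj1 : 0 < n - j <= n by lia.
have hLL := LLS (n - j); have hLBm := LB_le m (n - j); have hLLm := LL_le (n - j).+1.
apply: (r_jlt_t HC (j := 49)) => //; first by rd; rewrite H11 h6; lia.
apply: (r_load HC (j := 51) (x := OL + (n - j))) => //; first by rd.
  rewrite rd_L ?HL ?ltnn //; apply: Wok; lia.
rewrite rd_L ?HL ?ltnn // up_reg //.
case: (ltnP (LL (n - j).+1) (LB m (n - j))) => Hc.
- apply: (r_jlt_t HC (j := 52)) => //; first by rd; rewrite H9; lia.
  apply: (r_add HC (j := 54)) => //.
    rd; rewrite h14; apply: Wok; lia.
  rd; rewrite h14 up_reg //.
  apply: kont (K _ _); first lia.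
  do 3 eexists; split; first reflexivity.
  + by move: Hcr; rewrite /CR /setr /=.
  + by rewrite /setr /=.
  + by rewrite /setr /= hLL; lia.
  by split.
- apply: (r_jlt_f HC (j := 52)) => //; first by rd; rewrite H9; lia.
  apply: (r_jmp HC (j := 53)) => //.
  apply: kont (K _ _); first lia.
  do 3 eexists; split; first reflexivity.
  + by move: Hcr; rewrite /CR /setr /=.
  + by rewrite /setr /=.
  + by rewrite /setr /= hLL; lia.
  by split.
Qed.

Lemma lsweep2 j c T cf : j < n -> LI2 j c ->
  (forall c', LI j.+1 c' -> reach P W c' T cf) -> reach P W c (5 + T) cf.
Proof.
move=> Hj [regs [Lf [Rf [-> Hcr H11 H9 [HR HL]]]]] K.
have Hcr' := Hcr; case: Hcr' => [h0 h1 h3 h6 [h7 h10 h14 h15]].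
have hLLm := LL_le (n - j).
have Hj1 : 0 < n - j <= n by lia.
have E1 : (n - j.+1).+1 = n - j by lia.
have HLf v : v = outLv (n - j) -> forall y, 0 < y <= n ->
    setr Lf (n - j) v y = if n - j.+1 < y then outLv y else Posz (LB m y).
  move=> -> y Hy; rewrite /setr; case: eqP => [->|Hne]; first by rewrite ifT //; lia.
  have E : (n - j.+1 < y) = (n - j < y) by apply/idP/idP; lia.
  by rewrite HL // E.
case: (posnP (LL (n - j))) => Hc.
- apply: (r_jlt_t HC (j := 55)) => //; first by rd; rewrite H9 h0; lia.
  apply: (r_store HC (j := 60) (x := OL + (n - j))) => //; first by rd.
    rd; rewrite h15; apply: Wok; rewrite /OL; lia.
  rd; rewrite h15 up_L //.
  apply: (r_jmp HC (j := 61)) => //.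
  apply: (r_sub HC (j := 58)) => //.
    rd; rewrite H11 h0; apply: Wok; rewrite /OL; lia.
  rd; rewrite H11 h0 up_reg //.
  apply: (r_jmp HC (j := 59)) => //.
  apply: kont (K _ _); first lia.
  do 3 eexists; split; first reflexivity.
  + by move: Hcr; rewrite /CR /setr /=.
  + by rewrite /setr /=; lia.
  + by rewrite /setr /= E1.
  by split => //; apply: (HLf (-1)%R); rewrite /outLv Hc.
- apply: (r_jlt_f HC (j := 55)) => //; first by rd; rewrite H9 h0; lia.
  apply: (r_sub HC (j := 56)) => //.
    rd; rewrite H9 h10; apply: Wok; lia.
  rd; rewrite H9 h10 up_reg //.
  apply: (r_store HC (j := 57) (x := OL + (n - j))) => //; first by rd.
    rd; apply: Wok; rewrite /OL; lia.
  rd; rewrite up_L //.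
  apply: (r_sub HC (j := 58)) => //.
    rd; rewrite H11 h0; apply: Wok; rewrite /OL; lia.
  rd; rewrite H11 h0 up_reg //.
  apply: (r_jmp HC (j := 59)) => //.
  apply: kont (K _ _); first lia.
  do 3 eexists; split; first reflexivity.
  + by move: Hcr; rewrite /CR /setr /=.
  + by rewrite /setr /=; lia.
  + by rewrite /setr /= E1.
  by split => //; apply: HLf; rewrite /outLv ifF; lia.
Qed.
Lemma init_ok T F : (forall c', SI 0 c' -> reach P W c' T F) ->
  reach P W (Config l base) (12 + T) F.
Proof.
move=> K; rewrite absmem_base -[l]addn0.
set regs := fun k => _; set Lf := fun y => _; set Rf := fun x => _.
have Hm2 := hmn.
apply: (r_const HC (j := 0)) => //; first by apply: Wok; lia.
rewrite up_reg //.
apply: (r_const HC (j := 1)) => //; first by apply: Wok; lia.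
rewrite up_reg //.
apply: (r_const HC (j := 2)) => //; first by apply: Wok; lia.
rewrite up_reg //.
apply: (r_const HC (j := 3)) => //; first by apply: Wok; lia.
rewrite up_reg //.
apply: (r_add HC (j := 4)) => //.
  rd; apply: Wok; lia.
rd; rewrite up_reg //.
apply: (r_add HC (j := 5)) => //.
  rd; apply: Wok; lia.
rd; rewrite up_reg //.
apply: (r_add HC (j := 6)) => //.
  rd; apply: Wok; lia.
rd; rewrite up_reg //.
apply: (r_sub HC (j := 7)) => //.
  rd; apply: Wok; lia.
rd; rewrite up_reg //.
apply: (r_add HC (j := 8)) => //.
  rd; apply: Wok; lia.
rd; rewrite up_reg //.
apply: (r_add HC (j := 9)) => //.
  rd; apply: Wok; lia.
rd; rewrite up_reg //.
apply: (r_const HC (j := 10)) => //; first by apply: Wok; lia.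
rewrite up_reg //.
apply: (r_add HC (j := 11)) => //.
  rd; apply: Wok; lia.
rd; rewrite up_reg //.
apply: kont (K _ _); first lia.
do 3 eexists; split; first reflexivity.
- by rewrite /CR /setr /=; split; rewrite ?/OL ?/ORb; try lia; split; rewrite ?/OL ?/ORb; lia.
- by rewrite /setr /=; lia.
- by rewrite /setr /=.
split => x Hx; rewrite /Rf /Lf ?hbR ?hbL ?RB0 ?LB0 //.
Qed.
Lemma store_exit c T F : SI m c ->
  (forall c', RI 0 c' -> reach P W c' T F) -> reach P W c (6 + T) F.
Proof.
move=> [regs [Lf [Rf [-> Hcr H2 H4 [HR HL]]]]] K.
have Hcr' := Hcr; case: Hcr' => [h0 h1 h3 h6 [h7 h10 h14 h15]].
apply: (r_jlt_f HC (j := 12)) => //; first by rd; rewrite H2 h3; lia.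
apply: (r_jmp HC (j := 13)) => //.
apply: (r_add HC (j := 31)) => //.
  rd; rewrite h7 h0; apply: Wok; rewrite /ORb /OL; lia.
rd; rewrite h7 h0 up_reg //.
apply: (r_add HC (j := 32)) => //.
  rd; rewrite h7; apply: Wok; rewrite /ORb /OL; lia.
rd; rewrite h7 up_reg //.
apply: (r_add HC (j := 33)) => //.
  rd; rewrite h0; apply: Wok; rewrite /ORb /OL; lia.
rd; rewrite h0 up_reg //.
apply: (r_const HC (j := 34)) => //; first by apply: Wok; lia.
rewrite up_reg //.
apply: kont (K _ _); first lia.
do 3 eexists; split; first reflexivity.
- by move: Hcr; rewrite /CR /setr /=.
- by rewrite /setr /=; lia.
- by rewrite /setr /=; lia.
split => //; first by rewrite /setr /= RR0.
by move=> x Hx; rewrite HR // ifF //; lia.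
Qed.

Lemma rsweep_exit c T F : RI n c ->
  (forall c', LI 0 c' -> reach P W c' T F) -> reach P W c (4 + T) F.
Proof.
move=> [regs [Lf [Rf [-> Hcr H11 H12 [H9 HL HR]]]]] K.
have Hcr' := Hcr; case: Hcr' => [h0 h1 h3 h6 [h7 h10 h14 h15]].
apply: (r_jlt_f HC (j := 35)) => //; first by rd; rewrite H11 H12; lia.
apply: (r_jmp HC (j := 36)) => //.
apply: (r_add HC (j := 47)) => //.
  rd; rewrite h6; apply: Wok; rewrite /ORb /OL; lia.
rd; rewrite h6 up_reg //.
apply: (r_const HC (j := 48)) => //; first by apply: Wok; lia.
rewrite up_reg //.
apply: kont (K _ _); first lia.
do 3 eexists; split; first reflexivity.
- by move: Hcr; rewrite /CR /setr /=.
- by rewrite /setr /= subn0; lia.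
- by rewrite /setr /= subn0 LLn.
split => x Hx; first by rewrite HR // ifT //; lia.
by rewrite HL // subn0 ifF //; lia.
Qed.

Definition FIN c := exists regs Lf Rf,
  [/\ c = Config e (absmem regs Lf Rf),
      (forall x, 0 < x <= n -> Rf x = outRv x) &
      (forall y, 0 < y <= n -> Lf y = outLv y)].

Lemma lsweep_exit c T : LI n c -> reach P W c (2 + T) FIN.
Proof.
move=> [regs [Lf [Rf [-> Hcr H11 H9 [HR HL]]]]].
have Hcr' := Hcr; case: Hcr' => [h0 h1 h3 h6 [h7 h10 h14 h15]].
apply: (r_jlt_f HC (j := 49)) => //; first by rd; rewrite H11 h6; lia.
apply: (r_jmp HC (j := 50)) => //.
apply: reach_refl; do 3 eexists; split => //.
by move=> y Hy; rewrite HL // ifT //; lia.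
Qed.

Lemma prog_ok : reach P W (Config l base) (24 + 17 * m + 18 * n) FIN.
Proof.
apply: kont (init_ok (T := 17 * (m - 0) + (6 + (9 * (n - 0) + (4 + (9 * (n - 0) + (2 + 0)))))) _).
  lia.
move=> c0 H0.
apply: (loop (I := SI) (N := m) _ (k := 0)) => //.
  by move=> k c T' Hk HI K; exact: (store_body Hk HI K).
move=> c1 H1; apply: (store_exit H1) => c2 H2.
apply: (loop (I := RI) (N := n) _ (k := 0)) => //.
  move=> k c T' Hk HI K; rewrite (_ : 9 + T' = 4 + (5 + T')) //.
  by apply: (rsweep1 Hk HI) => c' H'; apply: (rsweep2 Hk H' K).
move=> c3 H3; apply: (rsweep_exit H3) => c4 H4.
apply: (loop (I := LI) (N := n) _ (k := 0)) => //.
  move=> k c T' Hk HI K; rewrite (_ : 9 + T' = 4 + (5 + T')) //.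
  by apply: (lsweep1 Hk HI) => c' H'; apply: (lsweep2 Hk H' K).
by move=> c5 H5; apply: (lsweep_exit _ H5).
Qed.
End Mem.

Unset Implicit Arguments.

Definition hdr : program := [:: IConst 2 16; IJlt 0 2 64].
Definition PP : program := hdr ++ prog 2 2 126 ++ prog 200 64 126.

Lemma code1 : code_at PP 2 (prog 2 2 126).
Proof.
split => // j Hj; rewrite /PP nth_cat.
rewrite (_ : (2 + j < size hdr) = false); last by rewrite /=; lia.
rewrite nth_cat (_ : (2 + j - size hdr) = j); last by rewrite /=; lia.
by rewrite Hj.
Qed.

Lemma code2 : code_at PP 64 (prog 200 64 126).
Proof.
split => // j Hj; rewrite /PP nth_cat.
Qed.

Lemma keys S A : LLRc_of S A ->
  (forall i, i < size A -> 0 < st A i <= size S /\ 0 < en A i <= size S) /\ size A <= size S.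
Proof.
move=> [Hs Hu].
have K i : i < size A -> 0 < st A i <= size S /\ 0 < en A i <= size S.
  move=> Hi; have := (Hu (nth (0,0) A i)).1 (mem_nth _ Hi).
  case=> [[[H1 H2 H3 _] _] _]; rewrite /st /en; split; apply/andP; split => //; [exact: leq_trans H2 H3 | exact: leq_trans H1 H2].
split => //.
have Hun : uniq (map fst A) by apply: (sorted_uniq ltn_trans ltnn).
rewrite -(size_map fst) -(size_iota 1 (size S)); apply: uniq_leq_size => // x /mapP [p Hp ->].
have [i Hi Ep] : exists2 i, i < size A & p = nth (0,0) A i.
  by exists (index p A); [rewrite index_mem | rewrite nth_index].
have := (K i Hi).1; rewrite /st -Ep mem_iota; lia.
Qed.

Section Base.
Variables (S : seq nat) (A : seq (nat * nat)).
Local Notation n := (size S).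
Local Notation m := (size A).
Hypothesis Hn : 0 < n.
Definition M1 := upd (init_mem S A) 2 16.

Lemma M1_0 : M1 0 = Posz n. Proof. by []. Qed.
Lemma M1_1 : M1 1 = Posz m. Proof. by []. Qed.
Lemma M1_st i : i < m -> M1 (n + 2 + 2 * i) = Posz (st A i).
Proof.
move=> Hi; rewrite /M1 /upd /init_mem.
rewrite ifF; last lia. rewrite ifF; last lia. rewrite ifF; last lia.
rewrite ifF; last lia. rewrite ifT; last lia.
rewrite (_ : n + 2 + 2 * i - (n + 2) = i.*2); last lia.
by rewrite doubleK odd_double.
Qed.
Lemma M1_en i : i < m -> M1 (n + 2 + 2 * i + 1) = Posz (en A i).
Proof.
move=> Hi; rewrite /M1 /upd /init_mem.
rewrite ifF; last lia. rewrite ifF; last lia. rewrite ifF; last lia.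
rewrite ifF; last lia. rewrite ifT; last lia.
rewrite (_ : n + 2 + 2 * i + 1 - (n + 2) = (i.*2).+1); last lia.
by rewrite /= uphalf_double odd_double.
Qed.
Lemma M1_L y : 0 < y <= n -> M1 (OL S A + y) = 0%R.
Proof.
move=> Hy; rewrite /M1 /upd /init_mem /OL.
rewrite ifF; last lia. rewrite ifF; last lia. rewrite ifF; last lia.
rewrite ifF; last lia. by rewrite ifF; last lia.
Qed.
Lemma M1_R x : 0 < x <= n -> M1 (ORb S A + x) = 0%R.
Proof.
move=> Hy; rewrite /M1 /upd /init_mem /ORb /OL.
rewrite ifF; last lia. rewrite ifF; last lia. rewrite ifF; last lia.
rewrite ifF; last lia. by rewrite ifF; last lia.
Qed.
End Base.

Lemma code0 : code_at PP 0 hdr.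
Proof. by split => // j; case: j => [|[|]]. Qed.

Theorem lemma7 :
  exists (P : program) (c : nat),
  forall (S : seq nat) (A : seq (nat * nat)),
    LLRc_of S A -> 1 <= size A ->
    exists (t : nat) (cf : config),
      [/\ t <= c * (size S).+1,
          run P t (init_config S A) = Some cf /\ halted P cf,
          (forall y, 1 <= y <= size S -> Lval A y (memory cf (outL S A y))),
          (forall x, 1 <= x <= size S -> Rval A x (memory cf (outR S A x)))
        & (forall t' c', t' < t -> run P t' (init_config S A) = Some c' ->
             forall a v, step_write P c' = Some (a, v) ->
               a < c * (size S).+1 /\ (`|v| <= (Posz (c * in_bound S)))%R)].
Proof.
exists PP, 1000 => S A HL Hm.
have [K hmn] := keys S A HL.
have hst i : i < size A -> 0 < st A i <= size S by move=> Hi; case: (K i Hi).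
have hen i : i < size A -> 0 < en A i <= size S by move=> Hi; case: (K i Hi).
have Hn : 0 < size S by have := hst 0 Hm; lia.
set B := 24 + 17 * size A + 18 * size S.
have [r [Hr R]] : exists r, (2 <= r <= 200 /\ (r + 16 <= size S + 2 \/ ORb S A + size S < r)) /\
    reach PP (W S) (init_config S A) B.+2 (FIN S A r (M1 S A) 126).
  case: (ltnP (size S) 16) => Hs.
  - have Hr : 2 <= 200 <= 200 /\ (200 + 16 <= size S + 2 \/ ORb S A + size S < 200).
      by split => //; right; rewrite /ORb /OL; lia.
    exists 200; split => //.
    apply: (r_const code0 (j := 0)) => //; first by rewrite /W /in_bound; lia.
    apply: (r_jlt_t code0 (j := 1) (a := 0) (b := 2) (lab := 64)) => //; try by rewrite /upd /=; lia.
    exact: (prog_ok Hr (M1_0 S A) (M1_1 S A) (M1_st S A Hn) (M1_en S A Hn) hst hen hmn Hm (M1_L S A Hn) (M1_R S A Hn) code2).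
  - have Hr : 2 <= 2 <= 200 /\ (2 + 16 <= size S + 2 \/ ORb S A + size S < 2).
      by split => //; left; lia.
    exists 2; split => //.
    apply: (r_const code0 (j := 0)) => //; first by rewrite /W /in_bound; lia.
    apply: (r_jlt_f code0 (j := 1) (a := 0) (b := 2) (lab := 64)) => //; try by rewrite /upd /=; lia.
    2: exact: (prog_ok Hr (M1_0 S A) (M1_1 S A) (M1_st S A Hn) (M1_en S A Hn) hst hen hmn Hm (M1_L S A Hn) (M1_R S A Hn) code1).
    by rewrite /upd /init_mem /=; lia.
case: R => cf [[t Ht [Hrun Hw]] [regs [Lf [Rf [Ecf HRf HLf]]]]].
exists t, cf; split => //.
- by move: Ht; rewrite /B; lia.
- by split => //; rewrite Ecf.
- move=> y Hy; rewrite Ecf /= (_ : outL S A y = OL S A + y); last by rewrite /outL /OL; lia.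
  rewrite (rd_L Hr (M1_0 S A) (M1_1 S A)) // HLf //.
  exact: (Lcorrect Hr (M1_0 S A) (M1_1 S A) hmn Hm).
- move=> x Hx; rewrite Ecf /= (_ : outR S A x = ORb S A + x); last by rewrite /outR /ORb /OL; lia.
  rewrite (rd_R Hr (M1_0 S A) (M1_1 S A)) // HRf //.
  exact: (Rcorrect Hr (M1_0 S A) (M1_1 S A) hmn Hm).
Qed.
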